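(* In the random execution model of the context, let $T_{\max}(t)=\max_iT_i(t)$ be the time at which the last node finishes iteration $t$. Then for all $\nu>0$ and all $t$, $$\mathbb{P}\big(T_{\max}(t)\ge\nu t\big)\le\sum_{w\ge\nu t}\sum_{i=1}^n\mathbb{E}\big[X^t(i,w)\big].$$
   Context: There are $n$ nodes and a communication graph. At each iteration $t$, independently, either a communication edge $(i,j)$ is activated (with probability $p_{ij}$) or a node $i$ performs a local computation (with probability $p_i^{\rm comp}$). Activating $(i,j)$ at iteration $t$ takes a random time $\tau_c^{ij}(t)$ and a local computation at $i$ takes a random time $\tau_l^i(t)$; these are positive-integer-valued. Completion times: $T_i(0)=0$; if $(k,\ell)$ is activated at iteration $t$, $T_k(t+1)=T_\ell(t+1)=\max(T_k(t),T_\ell(t))+\tau_c^{k\ell}(t)$; if $k$ computes, $T_k(t+1)=T_k(t)+\tau_l^k(t)$; other $T_i$ unchanged. Integer variables $X^t(i,w)$, $w\in\mathbb{N}$ (with $X^t(i,w)=0$ for $w<0$): $X^0(i,0)=1$ and $X^0(i,w)=0$ for $w\ne0$. If $(i,j)$ is activated at iteration $t$, then for all $w$, $X^{t+1}(i,w)=X^{t+1}(j,w)=X^t(i,w-\tau_c^{ij}(t))+X^t(j,w-\tau_c^{ij}(t))$; if node $i$ computes, $X^{t+1}(i,w+\tau_l^i(t))=X^t(i,w)$ for all $w\ge0$ and $X^{t+1}(i,w)=0$ for $w<\tau_l^i(t)$; all other $X^{t+1}(h,\cdot)=X^t(h,\cdot)$. *)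

(* Defs.v *)
From HB Require Import structures.
From mathcomp Require Import all_boot all_order all_algebra.
From mathcomp Require Import all_classical all_reals all_analysis.
Set Implicit Arguments. Unset Strict Implicit. Unset Printing Implicit Defensive.
Import Order.TTheory GRing.Theory Num.Theory.

(* Event performed at one iteration: either an edge (k,l) is activated
   (we use the convention k < l for the unordered edge {k,l}),
   or node k performs a local computation. *)
Inductive action (n : nat) : Type :=
  | Comm of 'I_n & 'I_n
  | Comp of 'I_n.

(* One step of the completion times T. tc k l = tau_c^{kl}(t), tl k = tau_l^k(t). *)
Definition stepT n (a : action n) (tc : 'I_n -> 'I_n -> nat) (tl : 'I_n -> nat)
  (T : 'I_n -> nat) : 'I_n -> nat :=
  fun h => match a with
  | Comm k l => if (h == k) || (h == l) then maxn (T k) (T l) + tc k l else T h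
  | Comp k => if h == k then T h + tl k else T h
  end.

(* One step of the counting variables X(i,w), w in N (X(i,w) = 0 for w < 0). *)
Definition stepX n (a : action n) (tc : 'I_n -> 'I_n -> nat) (tl : 'I_n -> nat)
  (X : 'I_n -> nat -> nat) : 'I_n -> nat -> nat :=
  fun h w => match a with
  | Comm k l => if (h == k) || (h == l) then
                  (if tc k l <= w then X k (w - tc k l) + X l (w - tc k l) else 0)%N
                else X h w
  | Comp k => if h == k then (if tl k <= w then X k (w - tl k) else 0)%N
              else X h w
  end.

(* T_i(t) along a realization: act t' = event at iteration t',
   tauc t' k l = tau_c^{kl}(t'), taul t' k = tau_l^k(t'). *)
Fixpoint Tt n (act : nat -> action n) (tauc : nat -> 'I_n -> 'I_n -> nat)
  (taul : nat -> 'I_n -> nat) (t : nat) : 'I_n -> nat :=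
  match t with
  | 0 => fun _ => 0%N
  | t'.+1 => stepT (act t') (tauc t') (taul t') (Tt act tauc taul t')
  end.

Fixpoint Xt n (act : nat -> action n) (tauc : nat -> 'I_n -> 'I_n -> nat)
  (taul : nat -> 'I_n -> nat) (t : nat) : 'I_n -> nat -> nat :=
  match t with
  | 0 => fun _ w => (w == 0%N : nat)
  | t'.+1 => stepX (act t') (tauc t') (taul t') (Xt act tauc taul t')
  end.

Definition Tmax n act tauc taul t : nat := \max_(i < n) @Tt n act tauc taul t i.

(* Main.v *)
Require Import Defs.
From HB Require Import structures.
From mathcomp Require Import all_boot all_order all_algebra.
From mathcomp Require Import all_classical all_reals all_analysis.
From mathcomp Require Import measurable_realfun.
Import Order.TTheory GRing.Theory Num.Theory.
Local Open Scope classical_set_scope.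
Local Open Scope ring_scope.

Lemma XT_pos n (act : nat -> action n) tc tl t (i : 'I_n) :
  (0 < Xt act tc tl t i (Tt act tc tl t i))%N.
Proof.
elim: t i => [|t IH] i /=; first by [].
rewrite /stepX /stepT; case: (act t) => [k l|k].
- case: ((i == k) || (i == l)); last exact: IH.
  rewrite leq_addl addnK /maxn.
  by case: (ltnP (Tt act tc tl t k) (Tt act tc tl t l)) => _; rewrite addn_gt0 !IH ?orbT.
- case: (eqVneq i k) => [->|_]; last exact: (IH i).
  by rewrite leq_addl addnK; apply: IH.
Qed.

Definition act_enc n (a : action n) : ('I_n * 'I_n) + 'I_n :=
  match a with Comm k l => inl (k, l) | Comp k => inr k end.
Definition act_dec n (x : ('I_n * 'I_n) + 'I_n) : action n :=
  match x with inl (k, l) => Comm k l | inr k => Comp k end.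
Lemma act_encK n : cancel (@act_enc n) (@act_dec n). Proof. by case. Qed.
HB.instance Definition _ n := Countable.copy (action n) (can_type (@act_encK n)).

Section M.
Context d (T : measurableType d).

Definition mfn {A : Type} (f : T -> A) := forall a, measurable [set w | f w = a].

Lemma mfn_ext {A} (f g : T -> A) : (forall w, f w = g w) -> mfn g -> mfn f.
Proof. by move=> e mg a; rewrite (_ : [set w | f w = a] = [set w | g w = a]) //; apply/seteqP; split=> w /=; rewrite e. Qed.

Lemma mfn_cst {A} (c : A) : mfn (fun _ => c).
Proof.
move=> a; have [->|ne] := pselect (c = a).
  by rewrite (_ : [set _ | a = a] = setT) //; apply/seteqP; split.
by rewrite (_ : [set _ | c = a] = set0) //; apply/seteqP; split=> w //=.
Qed.

Lemma mfn_bind {A B : Type} (f : T -> A) (g : A -> T -> B) :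
  countable [set: A] -> mfn f -> (forall a, mfn (g a)) -> mfn (fun w => g (f w) w).
Proof.
move=> cA mf mg b.
rewrite (_ : [set w | g (f w) w = b] = \bigcup_a ([set w | f w = a] `&` [set w | g a w = b])).
  by apply: countable_bigcupT_measurable => [|a]; [exact: cA | apply: measurableI; [exact: mf | exact: mg]].
apply/seteqP; split=> w /=.
  by move=> h; exists (f w) => //.
by case=> a _ [/= <-].
Qed.

Lemma mfn_map2 (f g : T -> nat) (F : nat -> nat -> nat) :
  mfn f -> mfn g -> mfn (fun w => F (f w) (g w)).
Proof.
move=> mf mg.
apply: (@mfn_bind _ _ f (fun a w => F a (g w))) => //.
move=> a; apply: (@mfn_bind _ _ g (fun b _ => F a b)) => //.
by move=> b; exact: mfn_cst.
Qed.

Lemma mfn_mfun (R : realType) (f : T -> nat) : mfn f ->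
  measurable_fun [set: T] (fun w => ((f w)%:R)%:E : \bar R).
Proof.
move=> mf _ Y mY; rewrite setTI.
rewrite (_ : _ @^-1` Y = \bigcup_(m in [set m : nat | Y (m%:R)%:E]) [set w | f w = m]).
  by apply: bigcup_measurable => k _; exact: mf.
apply/seteqP; split=> w /=.
  by move=> h; exists (f w).
by case=> m Ym /= fm; rewrite /= fm.
Qed.


Lemma mfn_bigmax (I : Type) (r : seq I) (F : I -> T -> nat) :
  (forall i, mfn (F i)) -> mfn (fun w => \big[maxn/0%N]_(i <- r) F i w).
Proof.
move=> mF; elim: r => [|i r IH].
  by apply: (@mfn_ext _ _ (fun _ => 0%N)) => [w|]; [rewrite big_nil | exact: mfn_cst].
apply: (@mfn_ext _ _ (fun w => maxn (F i w) (\big[maxn/0%N]_(j <- r) F j w))).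
  by move=> w; rewrite big_cons.
exact: (mfn_map2 _ _ maxn (mF i) IH).
Qed.

Variables (n : nat) (act : nat -> T -> action n)
  (tauc : nat -> 'I_n -> 'I_n -> T -> nat) (taul : nat -> 'I_n -> T -> nat).
Hypothesis act_meas : forall s (a : action n), measurable [set w | act s w = a].
Hypothesis tauc_meas : forall s k l (m : nat), measurable [set w | tauc s k l w = m].
Hypothesis taul_meas : forall s k (m : nat), measurable [set w | taul s k w = m].

Lemma mfn_Xt t i v : mfn (fun w => Xt (act^~ w) (fun s k l => tauc s k l w)
                                   (fun s k => taul s k w) t i v).
Proof.
elim: t i v => [|t IH] i v; first by exact: mfn_cst.
apply: (@mfn_bind _ _ (act t) (fun a w => stepX a (fun k l => tauc t k l w)
   (fun k => taul t k w) (Xt (act^~ w) (fun s k l => tauc s k l w)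
                                   (fun s k => taul s k w) t) i v)).
- exact: countableP.
- exact: act_meas.
case=> [k l|k]; rewrite /stepX.
- case: ((i == k) || (i == l)); last exact: IH.
  apply: (@mfn_bind _ _ (tauc t k l) (fun c w => if (c <= v)%N then
     (Xt (act^~ w) (fun s k l => tauc s k l w) (fun s k => taul s k w) t k (v - c)
    + Xt (act^~ w) (fun s k l => tauc s k l w) (fun s k => taul s k w) t l (v - c))%N
     else 0%N)).
  + exact: countableP.
  + exact: tauc_meas.
  move=> c; case: (c <= v)%N; last exact: mfn_cst.
  exact: (mfn_map2 _ _ addn (IH k (v - c)%N) (IH l (v - c)%N)).
- case: (i == k); last exact: IH.
  apply: (@mfn_bind _ _ (taul t k) (fun c w => if (c <= v)%N then
     Xt (act^~ w) (fun s k l => tauc s k l w) (fun s k => taul s k w) t k (v - c)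
     else 0%N)).
  + exact: countableP.
  + exact: taul_meas.
  move=> c; case: (c <= v)%N; last exact: mfn_cst.
  exact: IH.
Qed.

Lemma mfn_Tt t i : mfn (fun w => Tt (act^~ w) (fun s k l => tauc s k l w)
                                   (fun s k => taul s k w) t i).
Proof.
elim: t i => [|t IH] i; first by exact: mfn_cst.
apply: (@mfn_bind _ _ (act t) (fun a w => stepT a (fun k l => tauc t k l w)
   (fun k => taul t k w) (Tt (act^~ w) (fun s k l => tauc s k l w)
                                   (fun s k => taul s k w) t) i)).
- exact: countableP.
- exact: act_meas.
case=> [k l|k]; rewrite /stepT.
- case: ((i == k) || (i == l)); last exact: IH.
  apply: (mfn_map2 _ _ addn _ (tauc_meas t k l)).
  exact: (mfn_map2 _ _ maxn (IH k) (IH l)).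
- case: (i == k); last exact: IH.
  exact: (mfn_map2 _ _ addn (IH i) (taul_meas t k)).
Qed.

Lemma mfn_Tmax t : mfn (fun w => Tmax (act^~ w) (fun s k l => tauc s k l w)
                                   (fun s k => taul s k w) t).
Proof. by apply: mfn_bigmax => i; exact: mfn_Tt. Qed.

End M.

Theorem lemma3 (R : realType) (d : measure_display) (Omega : measurableType d)
  (P : probability Omega R) (n : nat) (edge : rel 'I_n)
  (p : 'I_n -> 'I_n -> R) (pc : 'I_n -> R)
  (act : nat -> Omega -> action n)
  (tauc : nat -> 'I_n -> 'I_n -> Omega -> nat)
  (taul : nat -> 'I_n -> Omega -> nat)
  (edge_sym : symmetric edge) (edge_irr : irreflexive edge)
  (p_ge0 : forall i j, 0 <= p i j) (pc_ge0 : forall i, 0 <= pc i)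
  (p_sum1 : \sum_(i < n) \sum_(j < n | (i < j)%N && edge i j) p i j
            + \sum_(i < n) pc i = 1)
  (act_edge : forall s w k l, act s w = Comm k l -> (k < l)%N && edge k l)
  (act_meas : forall s (a : action n), measurable [set w | act s w = a])
  (tauc_meas : forall s k l (m : nat), measurable [set w | tauc s k l w = m])
  (taul_meas : forall s k (m : nat), measurable [set w | taul s k w = m])
  (act_comm : forall s (k l : 'I_n), (k < l)%N -> edge k l ->
     P [set w | act s w = Comm k l] = (p k l)%:E)
  (act_comp : forall s (k : 'I_n), P [set w | act s w = Comp k] = (pc k)%:E)
  (tauc_pos : forall s k l w, (0 < tauc s k l w)%N)
  (taul_pos : forall s k w, (0 < taul s k w)%N)
  (nu : R) (t : nat) :
  0 < nu ->
  (P [set w | (nu * t%:R <= (Tmax (act^~ w) (fun s k l => tauc s k l w)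
                               (fun s k => taul s k w) t)%:R)%R]
  <= \sum_(v <oo | (nu * t%:R <= v%:R)%R)
       \sum_(i < n) \int[P]_w ((Xt (act^~ w) (fun s k l => tauc s k l w)
                                   (fun s k => taul s k w) t i v)%:R)%:E)%E.
Proof.
move=> nu0.
have n0 : (0 < n)%N.
  case: (posnP n) => // n0; subst n.
  by move/eqP: p_sum1; rewrite !big_ord0 addr0 eq_sym oner_eq0.
set X := fun v i w => Xt (act^~ w) (fun s k l => tauc s k l w) (fun s k => taul s k w) t i v.
set Tm := fun w => Tmax (act^~ w) (fun s k l => tauc s k l w) (fun s k => taul s k w) t.
set A := [set w | (nu * t%:R <= (Tm w)%:R)%R].
have mA : measurable A.
  rewrite (_ : A = \bigcup_(m in [set m : nat | (nu * t%:R <= m%:R)%R]) [set w | Tm w = m]).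
    by apply: bigcup_measurable => m _; exact: mfn_Tmax.
  apply/seteqP; split=> w /=; first by move=> h; exists (Tm w).
  by case=> m /= hm e; move: hm; rewrite -e.
have mX : forall v i, measurable_fun setT (fun w => ((X v i w)%:R)%:E : \bar R).
  by move=> v i; apply: mfn_mfun; exact: mfn_Xt.
pose h := fun v w => if (nu * t%:R <= v%:R)%R then \sum_(i < n) ((X v i w)%:R : R)%:E else (0 : \bar R).
have h0 : forall v w, (0 <= h v w)%E.
  by move=> v w; rewrite /h; case: (nu * t%:R <= v%:R)%R => //; apply: sume_ge0 => i _; rewrite lee_fin.
have mh : forall v, measurable_fun setT (h v).
  move=> v; rewrite /h; case: (nu * t%:R <= v%:R)%R; last exact: measurable_cst.
  by apply: emeasurable_sum => i; exact: mX.
have -> : (\sum_(v <oo | (nu * t%:R <= v%:R)%R) \sum_(i < n) \int[P]_w ((X v i w)%:R)%:E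
          = \sum_(v <oo) \int[P]_w h v w)%E.
  transitivity (\sum_(v <oo) (if (nu * t%:R <= v%:R)%R then
     \sum_(i < n) \int[P]_w ((X v i w)%:R)%:E else 0))%E.
    by apply/congr_lim/funext => k; rewrite big_mkcond.
  apply: eq_eseriesr => v _; rewrite /h; case: ifP => _.
    rewrite ge0_integral_sum //.
  by rewrite integral0_eq.
rewrite -integral_nneseries //.
have -> : (P A = \int[P]_w (\1_A w)%:E)%E by rewrite integral_indic // setIT.
apply: ge0_le_integral => //. all: try (by move=> w _; rewrite lee_fin).
- by apply/measurable_EFinP; exact: measurable_indic.
- by apply: ge0_emeasurable_sum => // k w _ _; exact: h0.
move=> w _; rewrite indicE; case: (boolP (w \in A)) => wA; last first.
  by apply: nneseries_ge0 => k _ _; exact: h0.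
have [i0 Hi0] := @bigop.eq_bigmax _ (fun i : 'I_n => Tt (act^~ w) (fun s k l => tauc s k l w) (fun s k => taul s k w) t i) ltac:(by rewrite card_ord).
have {}Hi0 : Tm w = Tt (act^~ w) (fun s k l => tauc s k l w) (fun s k => taul s k w) t i0 by exact: Hi0.
apply: (le_trans _ (nneseries_lim_ge (Tm w).+1 _)); last by move=> k _ _; exact: h0.
rewrite big_nat_recr //=.
apply: lee_paddl; first by apply: sume_ge0 => k _; exact: h0.
move: wA; rewrite inE /h => -> .
rewrite (bigD1 i0) //=.
apply: lee_paddr; first by apply: sume_ge0 => k _; rewrite lee_fin.
rewrite lee_fin ler1n /X Hi0.
exact: XT_pos.
Qed.
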